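(* Fix $C_1,C_2$ with $C_1>C_2>0$ and fix $C_3\in(0,C_{3,crit})$. Then $\mathfrak L(C_1,C_2,C_3,b)$ is strictly increasing in $b$ on $(b_-(C_3),b_+(C_3))$.
   Context: Let real constants $C_1,C_2$ be given with $2C_1+C_2>0$, and let $C_{3,crit}=\frac1{27}(2C_1+C_2)^3$. For $C_3\in(0,C_{3,crit})$, let $\phi_1<\phi_2<\phi_3$ be the roots of $2(\phi-C_1)^2(\phi+\frac{C_2}2)=C_3$; they satisfy $-\frac{C_2}{2}<\phi_1<\frac{C_1-C_2}{3}<\phi_2<C_1<\phi_3$. Let $U(\phi)=-\frac12\phi^2-\frac12C_2\phi-\frac12C_1C_2-\frac{C_3}{2(\phi-C_1)}$. Set $b_-(C_3)=U(\phi_2)$ and $b_+(C_3)=U(\phi_1)$. For $b\in(b_-(C_3),b_+(C_3))$, let $\phi_-<\phi_+$ be the two solutions of $U(\phi)=b$ with $\phi_1<\phi_-<\phi_2<\phi_+<C_1$. Define $$\mathfrak L(C_1,C_2,C_3,b)=2\int_{\phi_-}^{\phi_+}\frac{d\phi}{\sqrt{2(b-U(\phi))}}.$$ This is the period of the periodic orbit of $\frac12\dot\phi^2+U(\phi)=b$, which describes travelling waves of the DGH equation. *)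

(* Defs.v *)
From Stdlib Require Import Reals Lra.
From Coquelicot Require Import Coquelicot.
Open Scope R_scope.

Definition C3crit (C1 C2 : R) : R := (2 * C1 + C2) ^ 3 / 27.

Definition cubicC3 (C1 C2 phi : R) : R := 2 * (phi - C1) ^ 2 * (phi + C2 / 2).

Definition Upot (C1 C2 C3 phi : R) : R :=
  - (1/2) * phi ^ 2 - (1/2) * C2 * phi - (1/2) * C1 * C2 - C3 / (2 * (phi - C1)).

Definition period (C1 C2 C3 b phim phip : R) : R :=
  2 * RInt_gen (fun phi => 1 / sqrt (2 * (b - Upot C1 C2 C3 phi)))
              (at_right phim) (at_left phip).

(* Main.v *)
Require Import Defs.
From Stdlib Require Import Reals.
From Coquelicot Require Import Coquelicot.
From Stdlib Require Import Lra Psatz.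
Open Scope R_scope.

Definition fsq (z : R) : R := sqrt (z / (1 - z)).
Definition fdq (z : R) : R := / (2 * sqrt (z / (1 - z)) * (1 - z) ^ 2).

Lemma fsq_derive z : 0 < z < 1 -> is_derive fsq z (fdq z).
Proof.
  intros Hz. unfold fsq, fdq.
  assert (H1 : 0 < z / (1 - z)) by (apply Rdiv_lt_0_compat; lra).
  auto_derive.
  - repeat split; try lra. unfold Rdiv in H1. exact H1.
  - assert (0 < sqrt (z / (1 - z))) by (apply sqrt_lt_R0; lra).
    replace (z * / (1 + - z)) with (z / (1 - z)) by reflexivity.
    field. split; lra.
Qed.

Lemma zfd_mono w z : 0 < w -> w <= z -> z < 1 -> w * fdq w <= z * fdq z.
Proof.
  intros Hw Hwz Hz. unfold fdq.
  assert (Hw1 : 0 < w / (1 - w)) by (apply Rdiv_lt_0_compat; lra).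
  assert (Hz1 : 0 < z / (1 - z)) by (apply Rdiv_lt_0_compat; lra).
  assert (Sw : 0 < sqrt (w / (1 - w))) by (apply sqrt_lt_R0; lra).
  assert (Sz : 0 < sqrt (z / (1 - z))) by (apply sqrt_lt_R0; lra).
  set (kw := w * / (2 * sqrt (w / (1 - w)) * (1 - w) ^ 2)).
  set (kz := z * / (2 * sqrt (z / (1 - z)) * (1 - z) ^ 2)).
  assert (Ekw : kw ^ 2 = w / (4 * (1 - w) ^ 3)).
  { unfold kw. rewrite Rpow_mult_distr. rewrite pow_inv.
    rewrite !Rpow_mult_distr. replace (sqrt (w / (1 - w)) ^ 2) with (w / (1 - w)).
    2:{ rewrite <- Rsqr_pow2, Rsqr_sqrt; lra. }
    field. split; lra. }
  assert (Ekz : kz ^ 2 = z / (4 * (1 - z) ^ 3)).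
  { unfold kz. rewrite Rpow_mult_distr. rewrite pow_inv.
    rewrite !Rpow_mult_distr. replace (sqrt (z / (1 - z)) ^ 2) with (z / (1 - z)).
    2:{ rewrite <- Rsqr_pow2, Rsqr_sqrt; lra. }
    field. split; lra. }
  assert (Pkw : 0 < kw).
  { unfold kw. apply Rmult_lt_0_compat; [lra|]. apply Rinv_0_lt_compat.
    apply Rmult_lt_0_compat; [lra|]. apply pow_lt; lra. }
  assert (Pkz : 0 < kz).
  { unfold kz. apply Rmult_lt_0_compat; [lra|]. apply Rinv_0_lt_compat.
    apply Rmult_lt_0_compat; [lra|]. apply pow_lt; lra. }
  assert (kw ^ 2 <= kz ^ 2).
  { rewrite Ekw, Ekz. unfold Rdiv.
    assert (0 < (1 - z)) by lra.
    assert (1 - z <= 1 - w) by lra.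
    assert ((1 - z) ^ 3 <= (1 - w) ^ 3) by (apply pow_incr; lra).
    assert (0 < (1 - z) ^ 3) by (apply pow_lt; lra).
    apply Rle_trans with (z * / (4 * (1 - w) ^ 3)).
    - apply Rmult_le_compat_r; [|lra]. left. apply Rinv_0_lt_compat. lra.
    - apply Rmult_le_compat_l; [lra|]. apply Rinv_le_contravar; lra. }
  fold kw kz. nra.
Qed.

Definition hphi (P z : R) := fsq z + fsq (P / z).
Definition dhphi (P z : R) := fdq z + fdq (P / z) * (- P / z ^ 2).

Lemma hphi_derive P z : 0 < P -> P <= z * z -> z < 1 -> 0 < z ->
  is_derive (hphi P) z (dhphi P z).
Proof.
  intros HP Hz Hz1 Hz0. unfold hphi, dhphi.
  assert (Hw : 0 < P / z) by (apply Rdiv_lt_0_compat; lra).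
  assert (Hw1 : P / z <= z).
  { apply (Rmult_le_reg_r z); [lra|]. unfold Rdiv. rewrite Rmult_assoc, Rinv_l; lra. }
  apply (is_derive_plus fsq (fun z => fsq (P / z))).
  - apply fsq_derive; lra.
  - assert (E : fdq (P / z) * (- P / z ^ 2) = scal (- P / z ^ 2) (fdq (P / z))).
    { unfold scal; simpl; unfold mult; simpl; ring. }
    rewrite E.
    apply (is_derive_comp fsq (fun z => P / z)).
    + apply fsq_derive; lra.
    + auto_derive; [lra|]. field. lra.
Qed.

Lemma hphi_mono P a c : 0 < P -> P <= a * a -> 0 < a -> a <= c -> c < 1 ->
  hphi P a <= hphi P c.
Proof.
  intros HP Ha Ha0 Hac Hc.
  destruct (Req_dec a c) as [->|Hne]; [lra|].
  assert (Hlt : a < c) by lra.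
  destruct (MVT_gen (hphi P) a c (dhphi P)) as [xi [Hxi Heq]].
  - intros x Hx. rewrite Rmin_left in Hx by lra. rewrite Rmax_right in Hx by lra.
    apply hphi_derive; try lra. nra.
  - intros x Hx. rewrite Rmin_left in Hx by lra. rewrite Rmax_right in Hx by lra.
    apply continuity_pt_filterlim. apply (ex_derive_continuous (hphi P) x).
    eexists. apply hphi_derive; try lra. nra.
  - rewrite Rmin_left in Hxi by lra. rewrite Rmax_right in Hxi by lra.
    assert (0 <= dhphi P xi).
    { unfold dhphi.
      assert (Hx0 : 0 < xi) by lra.
      assert (Hw : 0 < P / xi) by (apply Rdiv_lt_0_compat; lra).
      assert (Hw1 : P / xi <= xi).
      { apply (Rmult_le_reg_r xi); [lra|]. unfold Rdiv. rewrite Rmult_assoc, Rinv_l; nra. }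
      pose proof (zfd_mono (P / xi) xi Hw Hw1 ltac:(lra)) as Hm.
      replace (fdq xi + fdq (P / xi) * (- P / xi ^ 2))
        with (/ xi * (xi * fdq xi - P / xi * fdq (P / xi))) by (field; lra).
      apply Rmult_le_pos; [left; apply Rinv_0_lt_compat; lra|lra]. }
    nra.
Qed.

Lemma fsq_le x y : 0 < x -> x <= y -> y < 1 -> fsq x <= fsq y.
Proof.
  intros. unfold fsq. apply sqrt_le_1_alt.
  unfold Rdiv. apply Rmult_le_compat; try lra.
  - left; apply Rinv_0_lt_compat; lra.
  - apply Rinv_le_contravar; lra.
Qed.

Lemma fsq_lt x y : 0 < x -> x < y -> y < 1 -> fsq x < fsq y.
Proof.
  intros. unfold fsq. apply sqrt_lt_1_alt. split.
  - apply Rlt_le, Rdiv_lt_0_compat; lra.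
  - unfold Rdiv. apply Rle_lt_trans with (y * / (1 - x)).
    + apply Rmult_le_compat_r; [left; apply Rinv_0_lt_compat|]; lra.
    + apply Rmult_lt_compat_l; [lra|]. apply Rinv_lt_contravar; [nra|lra].
Qed.

Lemma pairD a b a' b' : 0 < b -> b <= a -> a < 1 -> 0 < b' -> b' <= a' -> a' < 1 -> a < a' ->
  a * b < a' * b' -> fsq a + fsq b < fsq a' + fsq b'.
Proof.
  intros Hb Hba Ha Hb' Hba' Ha' Haa Hp.
  destruct (Rle_lt_dec b b') as [Hbb|Hbb].
  - assert (fsq b <= fsq b') by (apply fsq_le; lra).
    assert (fsq a < fsq a') by (apply fsq_lt; lra). lra.
  - set (c := a * b / b').
    assert (Hc1 : a < c).
    { unfold c. apply (Rmult_lt_reg_r b'); [lra|]. unfold Rdiv.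
      rewrite Rmult_assoc, Rinv_l; nra. }
    assert (Hc2 : c < a').
    { unfold c. apply (Rmult_lt_reg_r b'); [lra|]. unfold Rdiv.
      rewrite Rmult_assoc, Rinv_l; nra. }
    pose proof (hphi_mono (a * b) a c ltac:(nra) ltac:(nra) ltac:(lra) ltac:(lra) ltac:(lra)) as H.
    unfold hphi in H.
    replace (a * b / a) with b in H by (field; lra).
    replace (a * b / c) with b' in H by (unfold c; field; repeat split; try lra; nra).
    assert (fsq c < fsq a') by (apply fsq_lt; lra). lra.
Qed.

Definition gX (X u : R) := sqrt (u / (X - u)).

Lemma gX_fsq X u : 0 < X -> u < X -> gX X u = fsq (u / X).
Proof.
  intros. unfold gX, fsq. f_equal. field. split; lra.
Qed.

Lemma pairE M r X M' r' X' s :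
  0 <= r -> 0 < M - r -> M + r < X ->
  0 <= r' -> 0 < M' - r' -> M' + r' < X' ->
  M < M' -> r <= r' -> X' < X ->
  (M ^ 2 - r ^ 2) * X = (M' ^ 2 - r' ^ 2) * X' ->
  0 <= s <= 1 ->
  gX X (M - r * s) + gX X (M + r * s) < gX X' (M' - r' * s) + gX X' (M' + r' * s).
Proof.
  intros Hr HMr HX Hr' HMr' HX' HM Hrr HXX HK Hs.
  assert (HX0 : 0 < X') by nra.
  assert (Hrs : r * s <= r) by nra.
  assert (Hrs' : r' * s <= r') by nra.
  assert (Hrs0 : 0 <= r * s) by nra.
  assert (Hrs0' : 0 <= r' * s) by nra.
  rewrite !gX_fsq by nra.
  rewrite Rplus_comm, (Rplus_comm (fsq ((M' - r' * s) / X'))).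
  assert (HXp : 0 < X) by lra.
  apply pairD.
  - apply Rdiv_lt_0_compat; lra.
  - unfold Rdiv; apply Rmult_le_compat_r; [left; apply Rinv_0_lt_compat|]; lra.
  - apply (Rmult_lt_reg_r X); [lra|]. unfold Rdiv. rewrite Rmult_assoc, Rinv_l; lra.
  - apply Rdiv_lt_0_compat; lra.
  - unfold Rdiv; apply Rmult_le_compat_r; [left; apply Rinv_0_lt_compat|]; lra.
  - apply (Rmult_lt_reg_r X'); [lra|]. unfold Rdiv. rewrite Rmult_assoc, Rinv_l; lra.
  - apply Rle_lt_trans with ((M' + r' * s) / X).
    + unfold Rdiv; apply Rmult_le_compat_r; [left; apply Rinv_0_lt_compat|]; nra.
    + unfold Rdiv; apply Rmult_lt_compat_l; [nra|]. apply Rinv_lt_contravar; nra.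
  - set (K := (M ^ 2 - r ^ 2) * X).
    assert (HK0 : 0 < K) by (unfold K; apply Rmult_lt_0_compat; nra).
    assert (E1 : (M + r * s) / X * ((M - r * s) / X) =
                 (1 - s ^ 2) * (M / X) ^ 2 + s ^ 2 * (K / X ^ 3)) by (unfold K; field; lra).
    assert (E2 : (M' + r' * s) / X' * ((M' - r' * s) / X') =
                 (1 - s ^ 2) * (M' / X') ^ 2 + s ^ 2 * (K / X' ^ 3)) by (unfold K; rewrite HK; field; lra).
    rewrite E1, E2.
    assert (A1 : 0 < M / X) by (apply Rdiv_lt_0_compat; lra).
    assert (A2 : M / X < M' / X').
    { apply Rlt_le_trans with (M' / X).
      - unfold Rdiv; apply Rmult_lt_compat_r; [apply Rinv_0_lt_compat|]; lra.
      - unfold Rdiv; apply Rmult_le_compat_l; [nra|]. left; apply Rinv_lt_contravar; nra. }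
    assert (A3 : K / X ^ 3 < K / X' ^ 3).
    { unfold Rdiv; apply Rmult_lt_compat_l; [lra|]. apply Rinv_lt_contravar.
      - apply Rmult_lt_0_compat; apply pow_lt; lra.
      - assert (0 < X' * X') by nra. assert (X' * X' < X * X) by nra. simpl. rewrite !Rmult_1_r. nra. }
    assert ((M / X) ^ 2 < (M' / X') ^ 2) by nra.
    destruct (Req_dec s 0) as [->|Hs0].
    + simpl. lra.
    + assert (0 < s ^ 2) by nra.
      assert (0 <= 1 - s ^ 2) by nra.
      assert (0 <= (1 - s ^ 2) * ((M' / X') ^ 2 - (M / X) ^ 2)) by (apply Rmult_le_pos; lra).
      assert (0 < s ^ 2 * (K / X' ^ 3 - K / X ^ 3)) by (apply Rmult_lt_0_compat; lra).
      nra.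
Qed.

Lemma asin_near_m1 e : 0 < e -> exists d, 0 < d /\
  forall z, -1 < z < -1 + d -> asin z < - (PI / 2) + e.
Proof.
  intros He.
  set (e' := Rmin e (PI / 2)).
  assert (HPI : 0 < PI) by apply PI_RGT_0.
  assert (He' : 0 < e' <= PI / 2).
  { unfold e'. split; [apply Rmin_case; lra | apply Rmin_r]. }
  set (t0 := - (PI / 2) + e').
  assert (Hs : -1 < sin t0).
  { replace (-1) with (sin (- (PI / 2))) by (rewrite sin_neg, sin_PI2; ring).
    apply sin_increasing_1; unfold t0; lra. }
  exists (sin t0 + 1). split; [lra|].
  intros z Hz.
  assert (Hz1 : z < 1).
  { assert (sin t0 <= 1) by apply SIN_bound. lra. }
  destruct (Rlt_le_dec (asin z) t0) as [H|H].
  - assert (e' <= e) by apply Rmin_l. unfold t0 in H. lra.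
  - exfalso.
    destruct (asin_bound z) as [_ Hb].
    destruct H as [H|H].
    + assert (sin t0 < sin (asin z)).
      { apply sin_increasing_1; unfold t0 in *; lra. }
      rewrite sin_asin in H0 by lra. lra.
    + assert (z = sin t0) by (rewrite H, sin_asin; lra). lra.
Qed.

Lemma asin_near_1 e : 0 < e -> exists d, 0 < d /\
  forall z, 1 - d < z < 1 -> PI / 2 - e < asin z.
Proof.
  intros He. destruct (asin_near_m1 e He) as [d [Hd H]].
  exists d. split; [lra|]. intros z Hz.
  specialize (H (- z) ltac:(lra)). rewrite asin_opp in H. lra.
Qed.


Lemma gX_cont X u0 r th : 0 <= r -> r < u0 -> u0 + r < X ->
  continuous (fun t => gX X (u0 - r * sin t)) th.
Proof.
  intros Hr H1 H2. apply (ex_derive_continuous (fun t => gX X (u0 - r * sin t))).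
  assert (Hs := SIN_bound th).
  assert (0 < u0 - r * sin th) by nra.
  assert (0 < X - (u0 - r * sin th)) by nra.
  unfold gX. auto_derive. repeat split; try lra.
  apply Rmult_lt_0_compat; [lra|]. apply Rinv_0_lt_compat; lra.
Qed.

Lemma gX_bound X u0 r th : 0 <= r -> r < u0 -> u0 + r < X ->
  0 <= gX X (u0 - r * sin th) <= sqrt ((u0 + r) / (X - u0 - r)).
Proof.
  intros Hr H1 H2. assert (Hs := SIN_bound th).
  assert (0 < u0 - r * sin th) by nra.
  assert (0 < X - (u0 - r * sin th)) by nra.
  unfold gX. split; [apply sqrt_pos|]. apply sqrt_le_1_alt.
  unfold Rdiv. apply Rmult_le_compat.
  - lra.
  - left; apply Rinv_0_lt_compat; lra.
  - nra.
  - apply Rinv_le_contravar; nra.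
Qed.

Definition fint (C1 C2 C3 b : R) := fun phi => 1 / sqrt (2 * (b - Upot C1 C2 C3 phi)).

Lemma fint_cont C1 C2 C3 b phi : phi < C1 -> 0 < 2 * (b - Upot C1 C2 C3 phi) ->
  continuous (fint C1 C2 C3 b) phi.
Proof.
  intros H1 H2. apply (ex_derive_continuous (fint C1 C2 C3 b)).
  assert (H3 : 0 < sqrt (2 * (b - Upot C1 C2 C3 phi))) by (apply sqrt_lt_R0; lra).
  unfold fint. auto_derive. split; [|split; [exact H2|split; [exact (Rgt_not_eq _ _ H3)|exact I]]].
  unfold Upot. auto_derive. repeat split. intro; lra.
Qed.

Lemma integrand_id C1 C2 C3 b pm pp q th :
  q < pm -> pm < pp -> pp < C1 -> - (PI / 2) < th < PI / 2 ->
  2 * (b - Upot C1 C2 C3 ((pm + pp) / 2 + (pp - pm) / 2 * sin th)) =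
    ((pm + pp) / 2 + (pp - pm) / 2 * sin th - q) *
    ((pm + pp) / 2 + (pp - pm) / 2 * sin th - pm) *
    (pp - ((pm + pp) / 2 + (pp - pm) / 2 * sin th)) /
    (C1 - ((pm + pp) / 2 + (pp - pm) / 2 * sin th)) ->
  scal ((pp - pm) / 2 * cos th) (fint C1 C2 C3 b ((pm + pp) / 2 + (pp - pm) / 2 * sin th))
  = gX (C1 - q) (C1 - (pm + pp) / 2 - (pp - pm) / 2 * sin th).
Proof.
  intros Hq Hp HC Hth Hfac.
  change (scal ((pp - pm) / 2 * cos th) (fint C1 C2 C3 b ((pm + pp) / 2 + (pp - pm) / 2 * sin th))) with (((pp - pm) / 2 * cos th) * (fint C1 C2 C3 b ((pm + pp) / 2 + (pp - pm) / 2 * sin th))).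
  set (r := (pp - pm) / 2) in *.
  set (phi := (pm + pp) / 2 + r * sin th) in *.
  assert (Hr : 0 < r) by (unfold r; lra).
  assert (Hco : 0 < cos th) by (apply cos_gt_0; lra).
  assert (Hsc := sin2_cos2 th). unfold Rsqr in Hsc.
  assert (Hs := SIN_bound th).
  assert (Hphi1 : pm <= phi) by (unfold phi, r; nra).
  assert (Hphi2 : phi <= pp) by (unfold phi, r; nra).
  set (w := (phi - q) / (C1 - phi)).
  assert (Hw : 0 < w) by (unfold w; apply Rdiv_lt_0_compat; lra).
  assert (E : 2 * (b - Upot C1 C2 C3 phi) = (r * cos th) * (r * cos th) * w).
  { assert (Hc2 : cos th * cos th = 1 - sin th * sin th) by lra.
    assert (E1 : (phi - pm) * (pp - phi) = (r * cos th) * (r * cos th)).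
    { replace ((r * cos th) * (r * cos th)) with (r * r * (cos th * cos th)) by ring.
      rewrite Hc2. unfold phi, r. field. }
    rewrite Hfac. unfold w.
    replace ((phi - q) * (phi - pm) * (pp - phi) / (C1 - phi))
      with ((phi - pm) * (pp - phi) * ((phi - q) / (C1 - phi))) by (field; lra).
    rewrite E1. reflexivity. }
  unfold fint. rewrite E.
  assert (Hrc : 0 < r * cos th) by (apply Rmult_lt_0_compat; lra).
  rewrite sqrt_mult; [| nra | lra].
  rewrite sqrt_square by nra.
  unfold gX.
  replace ((C1 - (pm + pp) / 2 - r * sin th) / (C1 - q - (C1 - (pm + pp) / 2 - r * sin th)))
    with (/ w) by (unfold w, phi in *; field; split; lra).
  rewrite sqrt_inv.
  assert (0 < sqrt w) by (apply sqrt_lt_R0; lra).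
  assert (HH : r * cos th * (1 / (r * cos th * sqrt w)) = / sqrt w) by (field; split; nra).
  exact HH.
Qed.

Lemma asin_lt_mono u v : -1 < u < 1 -> -1 < v < 1 -> u < v -> asin u < asin v.
Proof.
  intros Hu Hv Huv.
  destruct (asin_bound_lt u Hu) as [Hu1 Hu2].
  destruct (asin_bound_lt v Hv) as [Hv1 Hv2].
  destruct (Rlt_le_dec (asin u) (asin v)) as [H|[H|H]]; auto.
  - assert (sin (asin v) < sin (asin u)) by (apply sin_increasing_1; lra).
    rewrite !sin_asin in H0 by lra. lra.
  - assert (sin (asin v) = sin (asin u)) by (rewrite H; reflexivity).
    rewrite !sin_asin in H0 by lra. lra.
Qed.

Lemma sin_between a t b : - (PI / 2) <= a -> b <= PI / 2 -> a <= t <= b ->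
  sin a <= sin t <= sin b.
Proof.
  intros Ha Hb [H1 H2]. split.
  - destruct H1 as [H1|H1]; [left; apply sin_increasing_1; lra| subst; lra].
  - destruct H2 as [H2|H2]; [left; apply sin_increasing_1; lra| subst; lra].
Qed.

Lemma sin_between_strict a t b : - (PI / 2) <= a -> b <= PI / 2 -> a < t < b ->
  sin a < sin t < sin b.
Proof.
  intros Ha Hb [H1 H2]. split; apply sin_increasing_1; lra.
Qed.

Lemma at_right_interval a e : 0 < e -> at_right a (fun x => a < x < a + e).
Proof.
  intros He. exists (mkposreal e He). intros y Hy Hay. simpl.
  change (Rabs (y - a) < e) in Hy. apply Rabs_def2 in Hy. lra.
Qed.

Lemma at_left_interval a e : 0 < e -> at_left a (fun x => a - e < x < a).
Proof.
  intros He. exists (mkposreal e He). intros y Hy Hay. simpl.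
  change (Rabs (y - a) < e) in Hy. apply Rabs_def2 in Hy. lra.
Qed.

Lemma period_repr C1 C2 C3 b pm pp q :
  q < pm -> pm < pp -> pp < C1 ->
  (forall phi, pm < phi < pp -> 2 * (b - Upot C1 C2 C3 phi) =
      (phi - q) * (phi - pm) * (pp - phi) / (C1 - phi)) ->
  period C1 C2 C3 b pm pp =
  2 * RInt (fun th => gX (C1 - q) (C1 - (pm + pp) / 2 - (pp - pm) / 2 * sin th))
        (- (PI / 2)) (PI / 2).
Proof.
  intros Hq Hp HC Hfac. unfold period. f_equal.
  set (c := (pm + pp) / 2). set (r := (pp - pm) / 2).
  assert (Hr : 0 < r) by (unfold r; lra).
  set (g := fun th => gX (C1 - q) (C1 - c - r * sin th)).
  assert (HPI := PI_RGT_0).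
  assert (Hgc : forall th, continuous g th).
  { intros th. unfold g. apply gX_cont; unfold c, r; lra. }
  assert (Hgex : forall u v, ex_RInt g u v).
  { intros u v. apply (@ex_RInt_continuous R_CompleteNormedModule). intros; apply Hgc. }
  set (Mg := sqrt ((C1 - c + r) / (C1 - q - (C1 - c) - r))).
  assert (HMg0 : 0 <= Mg) by apply sqrt_pos.
  assert (Hgb : forall th, Rabs (g th) <= Mg).
  { intros th. unfold g. destruct (gX_bound (C1 - q) (C1 - c) r th) as [H1 H2];
    try (unfold c, r; lra). rewrite Rabs_pos_eq by lra. exact H2. }
  assert (Hfpos : forall phi, pm < phi < pp -> 0 < 2 * (b - Upot C1 C2 C3 phi)).
  { intros phi Hphi. rewrite Hfac by lra. apply Rdiv_lt_0_compat; [|lra].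
    apply Rmult_lt_0_compat; [apply Rmult_lt_0_compat|]; lra. }
  change (fun phi : R => 1 / sqrt (2 * (b - Upot C1 C2 C3 phi))) with (fint C1 C2 C3 b).
  apply is_RInt_gen_unique.
  apply filterlimi_locally. intros eps.
  set (dt := eps / (2 * (Mg + 1))).
  assert (Hdt : 0 < dt) by (unfold dt; apply Rdiv_lt_0_compat; [apply cond_pos|lra]).
  destruct (asin_near_m1 dt Hdt) as [d1 [Hd1 Hn1]].
  destruct (asin_near_1 dt Hdt) as [d2 [Hd2 Hn2]].
  set (e1 := r * Rmin d1 1). set (e2 := r * Rmin d2 1).
  assert (He1 : 0 < e1) by (unfold e1; apply Rmult_lt_0_compat; [lra|apply Rmin_case; lra]).
  assert (He2 : 0 < e2) by (unfold e2; apply Rmult_lt_0_compat; [lra|apply Rmin_case; lra]).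
  assert (He1' : e1 <= r) by (unfold e1; pose proof (Rmin_r d1 1); nra).
  assert (He2' : e2 <= r) by (unfold e2; pose proof (Rmin_r d2 1); nra).
  apply (Filter_prod _ _ _ (fun x => pm < x < pm + e1) (fun y => pp - e2 < y < pp)).
  { apply at_right_interval; lra. }
  { apply at_left_interval; lra. }
  intros x y Hx Hy. simpl.
  set (tx := asin ((x - c) / r)). set (ty := asin ((y - c) / r)).
  assert (Hxr : -1 < (x - c) / r < 1).
  { split; [apply (Rmult_lt_reg_r r)|apply (Rmult_lt_reg_r r)]; try lra;
    unfold Rdiv; rewrite Rmult_assoc, Rinv_l by lra; unfold c, r in *; lra. }
  assert (Hyr : -1 < (y - c) / r < 1).
  { split; [apply (Rmult_lt_reg_r r)|apply (Rmult_lt_reg_r r)]; try lra;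
    unfold Rdiv; rewrite Rmult_assoc, Rinv_l by lra; unfold c, r in *; lra. }
  assert (Hxy : x < y) by (unfold c, r, e1, e2 in *; lra).
  assert (Htxy : tx < ty).
  { apply asin_lt_mono; try lra. unfold Rdiv.
    apply Rmult_lt_compat_r; [apply Rinv_0_lt_compat|]; lra. }
  destruct (asin_bound_lt _ Hxr) as [Htx1 Htx2]. fold tx in Htx1, Htx2.
  destruct (asin_bound_lt _ Hyr) as [Hty1 Hty2]. fold ty in Hty1, Hty2.
  assert (Hsx : c + r * sin tx = x).
  { unfold tx. rewrite sin_asin by lra. field. lra. }
  assert (Hsy : c + r * sin ty = y).
  { unfold ty. rewrite sin_asin by lra. field. lra. }
  assert (Htx3 : tx < - (PI / 2) + dt).
  { apply Hn1. split; [lra|].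
    apply (Rmult_lt_reg_r r); [lra|]. unfold Rdiv. rewrite Rmult_assoc, Rinv_l by lra.
    pose proof (Rmin_l d1 1). unfold e1 in Hx. unfold c, r in *. nra. }
  assert (Hty3 : PI / 2 - dt < ty).
  { apply Hn2. split; [|lra].
    apply (Rmult_lt_reg_r r); [lra|]. unfold Rdiv. rewrite Rmult_assoc, Rinv_l by lra.
    pose proof (Rmin_l d2 1). unfold e2 in Hy. unfold c, r in *. nra. }
  exists (RInt (fint C1 C2 C3 b) x y). split.
  - apply (@RInt_correct R_CompleteNormedModule). apply (@ex_RInt_continuous R_CompleteNormedModule).
    intros z Hz. rewrite Rmin_left in Hz by lra. rewrite Rmax_right in Hz by lra.
    apply fint_cont; [lra|]. apply Hfpos. lra.
  - assert (Hcomp : RInt (fint C1 C2 C3 b) x y = RInt g tx ty).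
    { rewrite <- Hsx, <- Hsy.
      rewrite <- (RInt_comp (fint C1 C2 C3 b) (fun t => c + r * sin t) (fun t => r * cos t)).
      - apply RInt_ext. intros t Ht.
        rewrite Rmin_left in Ht by lra. rewrite Rmax_right in Ht by lra.
        pose proof (sin_between_strict tx t ty ltac:(lra) ltac:(lra) Ht) as Hst.
        assert (r * sin tx < r * sin t) by (apply Rmult_lt_compat_l; lra).
        assert (r * sin t < r * sin ty) by (apply Rmult_lt_compat_l; lra).
        assert (pm < c + r * sin t < pp) by lra.
        unfold g, c, r in *. apply integrand_id; try lra.
        apply Hfac. lra.
      - intros t Ht. rewrite Rmin_left in Ht by lra. rewrite Rmax_right in Ht by lra.
        pose proof (sin_between tx t ty ltac:(lra) ltac:(lra) Ht) as Hst.
        assert (r * sin tx <= r * sin t) by (apply Rmult_le_compat_l; lra).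
        assert (r * sin t <= r * sin ty) by (apply Rmult_le_compat_l; lra).
        apply fint_cont; [unfold c, r in *; lra|]. apply Hfpos. lra.
      - intros t Ht. split.
        + auto_derive; [exact I|ring].
        + apply (ex_derive_continuous (fun t => r * cos t)). auto_derive. exact I. }
    rewrite Hcomp.
    change (Rabs (RInt g tx ty - RInt g (- (PI / 2)) (PI / 2)) < eps).
    rewrite <- (RInt_Chasles g (- (PI / 2)) tx (PI / 2)) by apply Hgex.
    rewrite <- (RInt_Chasles g tx ty (PI / 2)) by apply Hgex.
    assert (B1 : Rabs (RInt g (- (PI / 2)) tx) <= (tx - - (PI / 2)) * Mg).
    { apply abs_RInt_le_const; [lra|apply Hgex|]. intros; apply Hgb. }
    assert (B2 : Rabs (RInt g ty (PI / 2)) <= (PI / 2 - ty) * Mg).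
    { apply abs_RInt_le_const; [lra|apply Hgex|]. intros; apply Hgb. }
    change plus with Rplus.
    replace (RInt g tx ty - (RInt g (- (PI / 2)) tx + (RInt g tx ty + RInt g ty (PI / 2))))
      with (- (RInt g (- (PI / 2)) tx + RInt g ty (PI / 2))) by ring.
    rewrite Rabs_Ropp.
    eapply Rle_lt_trans; [apply Rabs_triang|].
    assert (E : 2 * dt * Mg < eps).
    { unfold dt. assert (0 < eps) by apply cond_pos.
      apply (Rmult_lt_reg_r (Mg + 1)); [lra|].
      replace (2 * (eps / (2 * (Mg + 1))) * Mg * (Mg + 1)) with (eps * Mg) by (field; lra).
      nra. }
    nra.
Qed.

Lemma RInt_sym (g : R -> R) : (forall t, continuous g t) ->
  RInt g (- (PI / 2)) (PI / 2) = RInt (fun t => g t + g (- t)) 0 (PI / 2).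
Proof.
  intros Hg.
  assert (Hex : forall u v, ex_RInt g u v).
  { intros. apply (@ex_RInt_continuous R_CompleteNormedModule). intros; apply Hg. }
  assert (Hgo : forall t, continuous (fun t => g (- t)) t).
  { intros t. apply (continuous_comp (fun t => - t) g). 
    - apply (ex_derive_continuous (fun t => - t)). auto_derive. exact I.
    - apply Hg. }
  assert (Hex2 : forall u v, ex_RInt (fun t => g (- t)) u v).
  { intros. apply (@ex_RInt_continuous R_CompleteNormedModule). intros; apply Hgo. }
  rewrite <- (RInt_Chasles g (- (PI / 2)) 0 (PI / 2)) by apply Hex.
  assert (E : RInt (fun t => g t + g (- t)) 0 (PI / 2) =
     RInt g 0 (PI / 2) + RInt (fun t => g (- t)) 0 (PI / 2)).
  { apply (RInt_plus g (fun t => g (- t))); [apply Hex|apply Hex2]. }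
  rewrite E. clear E.
  assert (H0 : is_RInt g (- (PI / 2)) (- 0) (RInt g (- (PI / 2)) 0)).
  { rewrite Ropp_0. apply (@RInt_correct R_CompleteNormedModule). apply Hex. }
  pose proof (is_RInt_comp_opp g (PI / 2) 0 _ H0) as H1.
  pose proof (is_RInt_swap _ _ _ _ H1) as H2.
  pose proof (is_RInt_opp _ _ _ _ H2) as H3.
  pose proof (is_RInt_unique _ _ _ _ H3) as H4.
  assert (H5 : RInt (fun t => g (- t)) 0 (PI / 2) = opp (opp (RInt g (- (PI / 2)) 0))).
  { etransitivity; [|exact H4]. apply RInt_ext. intros. cbv beta. symmetry. apply opp_opp. }
  rewrite opp_opp in H5. rewrite H5.
  transitivity (RInt g (- (PI / 2)) 0 + RInt g 0 (PI / 2)); [reflexivity|apply Rplus_comm].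
Qed.

Definition Nb (C1 C2 C3 b phi : R) := (C1 - phi) * (2 * b + phi ^ 2 + C2 * phi + C1 * C2) - C3.

Lemma Nb_U C1 C2 C3 b phi : phi <> C1 ->
  Nb C1 C2 C3 b phi = (C1 - phi) * (2 * (b - Upot C1 C2 C3 phi)).
Proof.
  intros H. unfold Nb, Upot. field. intro. apply H. lra.
Qed.

Lemma Nb_factor C1 C2 C3 b pm pp : pm < pp -> pp < C1 ->
  Upot C1 C2 C3 pm = b -> Upot C1 C2 C3 pp = b ->
  forall phi, Nb C1 C2 C3 b phi = (phi - (C1 - C2 - pm - pp)) * (phi - pm) * (pp - phi).
Proof.
  intros H1 H2 Hm Hp phi.
  assert (Em : Nb C1 C2 C3 b pm = 0).
  { rewrite Nb_U by lra. rewrite Hm. ring. }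
  assert (Ep : Nb C1 C2 C3 b pp = 0).
  { rewrite Nb_U by lra. rewrite Hp. ring. }
  set (q := C1 - C2 - pm - pp).
  assert (Id : (Nb C1 C2 C3 b phi - (phi - q) * (phi - pm) * (pp - phi)) * (pp - pm) =
               Nb C1 C2 C3 b pm * (pp - phi) + Nb C1 C2 C3 b pp * (phi - pm)).
  { unfold Nb, q. ring. }
  rewrite Em, Ep in Id.
  assert (Nb C1 C2 C3 b phi - (phi - q) * (phi - pm) * (pp - phi) = 0).
  { apply (Rmult_eq_reg_r (pp - pm)); [|lra]. rewrite Id. ring. }
  lra.
Qed.

Lemma Nb_diff C1 C2 C3 b b' phi :
  Nb C1 C2 C3 b' phi = Nb C1 C2 C3 b phi + 2 * (C1 - phi) * (b' - b).
Proof. unfold Nb. ring. Qed.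

Lemma sgnA x y z : x * y * z < 0 -> y < 0 -> 0 < z -> 0 < x.
Proof. intros H Hy Hz. assert (y * z < 0) by nra. nra. Qed.

Lemma sgnB x y z : 0 < x * y * z -> 0 < x -> 0 < z -> 0 < y.
Proof. intros H Hx Hz. assert (0 < x * z) by nra. nra. Qed.

Lemma sgnC x y z : 0 < x * y * z -> 0 < x -> 0 < y -> 0 < z.
Proof. intros H Hx Hy. assert (0 < x * y) by nra. nra. Qed.

Lemma gsum_cont X u0 r t : 0 <= r -> r < u0 -> u0 + r < X ->
  continuous (fun t => gX X (u0 - r * sin t) + gX X (u0 - r * sin (- t))) t.
Proof.
  intros H1 H2 H3.
  apply (ex_derive_continuous (fun t => gX X (u0 - r * sin t) + gX X (u0 - r * sin (- t)))).
  assert (Hs := SIN_bound t). assert (Hs' := SIN_bound (- t)).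
  assert (0 < u0 - r * sin t) by nra.
  assert (0 < X - (u0 - r * sin t)) by nra.
  assert (0 < u0 - r * sin (- t)) by nra.
  assert (0 < X - (u0 - r * sin (- t))) by nra.
  unfold gX. auto_derive. repeat split; try lra.
  - apply Rmult_lt_0_compat; [lra|]. apply Rinv_0_lt_compat; lra.
  - apply Rmult_lt_0_compat; [lra|]. apply Rinv_0_lt_compat; lra.
Qed.

Theorem lemma1 (C1 C2 C3 : R)
  (hC : 0 < C2 < C1) (hC3 : 0 < C3 < C3crit C1 C2)
  (phi1 phi2 phi3 : R) (hord : phi1 < phi2 < phi3)
  (hr1 : cubicC3 C1 C2 phi1 = C3) (hr2 : cubicC3 C1 C2 phi2 = C3)
  (hr3 : cubicC3 C1 C2 phi3 = C3)
  (b b' : R)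
  (hb : Upot C1 C2 C3 phi2 < b) (hbb' : b < b') (hb' : b' < Upot C1 C2 C3 phi1)
  (pm pp pm' pp' : R)
  (hs : phi1 < pm /\ pm < phi2 /\ phi2 < pp /\ pp < C1)
  (hU : Upot C1 C2 C3 pm = b /\ Upot C1 C2 C3 pp = b)
  (hs' : phi1 < pm' /\ pm' < phi2 /\ phi2 < pp' /\ pp' < C1)
  (hU' : Upot C1 C2 C3 pm' = b' /\ Upot C1 C2 C3 pp' = b') :
  period C1 C2 C3 b pm pp < period C1 C2 C3 b' pm' pp'.
Proof.
  destruct hs as [s1 [s2 [s3 s4]]]. destruct hs' as [t1 [t2 [t3 t4]]].
  destruct hU as [u1 u2]. destruct hU' as [v1 v2].
  pose proof (Nb_factor C1 C2 C3 b pm pp ltac:(lra) s4 u1 u2) as F.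
  pose proof (Nb_factor C1 C2 C3 b' pm' pp' ltac:(lra) t4 v1 v2) as F'.
  set (q := C1 - C2 - pm - pp) in F.
  set (q' := C1 - C2 - pm' - pp') in F'.
  assert (Hq1 : q < phi1).
  { pose proof (Nb_U C1 C2 C3 b phi1 ltac:(lra)) as E. rewrite F in E.
    assert (0 < (C1 - phi1) * (2 * (Upot C1 C2 C3 phi1 - b))) by (apply Rmult_lt_0_compat; lra).
    assert (0 < phi1 - q); [|lra].
    apply (sgnA _ (phi1 - pm) (pp - phi1)); [|lra|lra]. rewrite E. nra. }
  assert (Hq1' : q' < phi1).
  { pose proof (Nb_U C1 C2 C3 b' phi1 ltac:(lra)) as E. rewrite F' in E.
    assert (0 < (C1 - phi1) * (2 * (Upot C1 C2 C3 phi1 - b'))) by (apply Rmult_lt_0_compat; lra).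
    assert (0 < phi1 - q'); [|lra].
    apply (sgnA _ (phi1 - pm') (pp' - phi1)); [|lra|lra]. rewrite E. nra. }
  assert (Hqq : q < q').
  { pose proof (Nb_diff C1 C2 C3 b b' q') as E. rewrite F, F' in E.
    assert (0 < 2 * (C1 - q') * (b' - b)) by (apply Rmult_lt_0_compat; [|lra]; lra).
    assert (0 < q' - q); [|lra].
    apply (sgnA _ (q' - pm) (pp - q')); [|lra|lra].
    replace ((q' - q) * (q' - pm) * (pp - q')) with
      ((q' - q') * (q' - pm') * (pp' - q') - 2 * (C1 - q') * (b' - b)) by lra.
    nra. }
  assert (Hpm : pm' < pm).
  { pose proof (Nb_diff C1 C2 C3 b b' pm) as E. rewrite F, F' in E.
    assert (0 < 2 * (C1 - pm) * (b' - b)) by (apply Rmult_lt_0_compat; [|lra]; lra).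
    assert (0 < pm - pm'); [|lra].
    apply (sgnB (pm - q') _ (pp' - pm)); [|lra|lra]. rewrite E. nra. }
  assert (Hpp : pp < pp').
  { pose proof (Nb_diff C1 C2 C3 b b' pp) as E. rewrite F, F' in E.
    assert (0 < 2 * (C1 - pp) * (b' - b)) by (apply Rmult_lt_0_compat; [|lra]; lra).
    assert (0 < pp' - pp); [|lra].
    apply (sgnC (pp - q') (pp - pm')); [|lra|lra]. rewrite E. nra. }
  assert (HK : (C1 - q) * (C1 - pm) * (C1 - pp) = C3).
  { pose proof (F C1) as E. unfold Nb in E. nra. }
  assert (HK' : (C1 - q') * (C1 - pm') * (C1 - pp') = C3).
  { pose proof (F' C1) as E. unfold Nb in E. nra. }
  assert (Fac : forall phi, pm < phi < pp -> 2 * (b - Upot C1 C2 C3 phi) =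
      (phi - q) * (phi - pm) * (pp - phi) / (C1 - phi)).
  { intros phi Hphi. pose proof (Nb_U C1 C2 C3 b phi ltac:(lra)) as E. rewrite F in E.
    rewrite E. field. lra. }
  assert (Fac' : forall phi, pm' < phi < pp' -> 2 * (b' - Upot C1 C2 C3 phi) =
      (phi - q') * (phi - pm') * (pp' - phi) / (C1 - phi)).
  { intros phi Hphi. pose proof (Nb_U C1 C2 C3 b' phi ltac:(lra)) as E. rewrite F' in E.
    rewrite E. field. lra. }
  rewrite (period_repr C1 C2 C3 b pm pp q ltac:(lra) ltac:(lra) ltac:(lra) Fac).
  rewrite (period_repr C1 C2 C3 b' pm' pp' q' ltac:(lra) ltac:(lra) ltac:(lra) Fac').
  apply Rmult_lt_compat_l; [lra|].
  assert (HPI := PI_RGT_0).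
  rewrite !RInt_sym by (intros; apply gX_cont; lra).
  apply RInt_lt; [lra| intros; apply gsum_cont; lra | intros; apply gsum_cont; lra |].
  intros t Ht.
  assert (Hs0 : 0 < sin t) by (apply sin_gt_0; lra).
  assert (Hs1 := SIN_bound t).
  rewrite !sin_neg.
  pose proof (pairE (C1 - (pm + pp) / 2) ((pp - pm) / 2) (C1 - q)
                    (C1 - (pm' + pp') / 2) ((pp' - pm') / 2) (C1 - q') (sin t)) as HP.
  replace (C1 - (pm + pp) / 2 - (pp - pm) / 2 * - sin t) with
    (C1 - (pm + pp) / 2 + (pp - pm) / 2 * sin t) by ring.
  replace (C1 - (pm' + pp') / 2 - (pp' - pm') / 2 * - sin t) with
    (C1 - (pm' + pp') / 2 + (pp' - pm') / 2 * sin t) by ring.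
  apply HP; try lra.
  all: first [ (unfold q, q' in Hqq; lra) | (transitivity C3; [rewrite <- HK; ring | rewrite <- HK'; ring]) | idtac ]. all: match goal with |- ?g => idtac g end.
Qed.
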